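(* Consider the search tree built by the POMCP++ simulation process described in the context, with $\epsilon_z<0$. Let $h\bm a$ be a belief-action node and $h\bm a\bm z$ one of its child belief nodes. If $h\bm a$ is visited infinitely often, then with probability $1$ the node $h\bm a\bm z$ is visited infinitely often.
   Context: POMCP++ builds a search tree whose nodes alternate between belief nodes (the root, or histories $h=(\bm a_0,\bm z_0,\dots,\bm z_t)$ ending with a measurement) and belief-action nodes (histories $h\bm a$ ending with an action). The action set $\mathcal A_m$ is finite. The process runs an infinite sequence of simulation episodes; each episode starts at the root and descends. At an already expanded belief node $h$ (a ''visit'' of $h$), an action is selected by the $\epsilon$-greedy rule: with probability $1-\epsilon_a$ the action maximizing the current value estimate $V(h\bm a)$ is chosen, and with probability $\epsilon_a$ an action is chosen uniformly at random from $\mathcal A_m$, the randomization being drawn freshly and independently of the past at each visit; the episode then visits $h\bm a$. At a belief-action node $h\bm a$ having $c$ existing child belief nodes, with probability $(c+1)^{\epsilon_z}$ (where $\epsilon_z<0$ is a parameter) a new measurement is sampled from a continuous distribution and a new child belief node $h\bm a\bm z$ is created (almost surely distinct from existing children), after which the descent stops (a rollout is performed); otherwise one of the $c$ existing children is chosen uniformly at random and the descent continues into it (a visit of that child). A newly reached unexpanded belief node is expanded (its belief-action children are created) and the descent stops. Descent also stops at depths $d$ with $\gamma^d<\epsilon$ for fixed $\gamma\in(0,1)$, $\epsilon>0$. *)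

(* Defs.v *)
From HB Require Import structures.
From mathcomp Require Import all_boot all_order all_algebra.
From mathcomp Require Import all_classical all_reals all_analysis.
Set Implicit Arguments. Unset Strict Implicit. Unset Printing Implicit Defensive.
Import Order.TTheory GRing.Theory Num.Theory.
Local Open Scope classical_set_scope.
Local Open Scope ring_scope.

(* Probability (c+1)^{eps_z} of creating a new child at a belief-action node
   that currently has c children. *)
Definition new_child_prob (R : realType) (epsz : R) (c : nat) : R :=
  (c.+1)%:R `^ epsz.

(* The progressive-widening decision at one visit of the belief-action node,
   driven by a fresh uniform random number u in [0,1):
   - None      : a new child is created (probability (c+1)^{eps_z}) and the
                 descent stops there;
   - Some i    : the existing child number i (children numbered 0..c-1 in
                 order of creation) is chosen, uniformly among the c
                 existing children, and visited. *)
Definition pw_decision (R : realType) (epsz : R) (c : nat) (u : R) : option nat :=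
  let p := new_child_prob epsz c in
  if u < p then None else Some (Num.truncn (c%:R * (u - p) / (1 - p))).

(* Number of children of the belief-action node just before its m-th visit
   (m = 0,1,2,...), the node having no child when created. *)
Fixpoint nchildren (T : Type) (R : realType) (epsz : R) (U : nat -> T -> R)
    (w : T) (m : nat) : nat :=
  match m with
  | 0 => 0
  | m'.+1 => let c := nchildren epsz U w m' in
             if pw_decision epsz c (U m' w) is None then c.+1 else c
  end.

Definition decision (T : Type) (R : realType) (epsz : R) (U : nat -> T -> R)
    (w : T) (m : nat) : option nat :=
  pw_decision epsz (nchildren epsz U w m) (U m w).

Definition mutually_independent (d : measure_display) (T : measurableType d)
    (R : realType) (P : probability T R) (X : nat -> T -> R) : Prop :=
  forall (I : seq nat) (B : nat -> set R),
    uniq I -> (forall i, i \in I -> measurable (B i)) ->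
    P (\bigcap_(i in [set i | i \in I]) (X i @^-1` B i)) =
    (\prod_(i <- I) P (X i @^-1` B i))%E.

Definition uniform01 (d : measure_display) (T : measurableType d)
    (R : realType) (P : probability T R) (X : T -> R) : Prop :=
  measurable_fun setT X /\
  forall B : set R, measurable B ->
    P (X @^-1` B) = lebesgue_measure (B `&` `[0%R, 1%R]).

Definition child_visited_io (T : Type) (R : realType) (epsz : R)
    (U : nat -> T -> R) (w : T) (j : nat) : Prop :=
  forall N, exists2 m, (N <= m)%N & decision epsz U w m = Some j.

(* Main.v *)
Require Import Defs.
From HB Require Import structures.
From mathcomp Require Import all_boot all_order all_algebra.
From mathcomp Require Import all_classical all_reals all_analysis.
From mathcomp Require Import ring lra zify.
Import Order.TTheory GRing.Theory Num.Theory.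
Local Open Scope classical_set_scope.
Local Open Scope ring_scope.

Section Reals.
Context (R : realType) (epsz : R) (heps : epsz < 0) (j : nat).

Definition pp (c : nat) : R := new_child_prob epsz c.

Lemma pp_gt0 c : 0 < pp c.
Proof. by apply: powR_gt0; rewrite ltr0n. Qed.

Lemma pp_le_pp1 {c} : (0 < c)%N -> pp c <= pp 1.
Proof.
move=> c0; rewrite /pp /new_child_prob.
have h : (2%:R : R) `^ (-epsz) <= c.+1%:R `^ (-epsz).
  apply: (@ge0_ler_powR R (- epsz)); rewrite ?nnegrE ?ler0n ?ler_nat //.
  by rewrite oppr_ge0 ltW.
have e1 : forall x : R, x `^ epsz = (x `^ (- epsz))^-1.
  by move=> x; rewrite -powRN opprK.
rewrite !e1 lef_pV2 ?posrE ?powR_gt0 ?ltr0n //.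
Qed.

Lemma pp1_lt1 : pp 1 < 1.
Proof.
rewrite /pp /new_child_prob.
have hne : (2%:R:R) `^ epsz != 1.
  by rewrite powR_eq1 !negb_or pnatr_eq1 /= -leNgt ler0n lt_eqF.
have hle : (2%:R:R) `^ epsz <= 1.
  rewrite -[X in _ <= X](powRr0 (2%:R : R)).
  by apply: (@ler_powR R 2%:R); rewrite ?ler1n // ltW.
by rewrite lt_neqAle hne hle.
Qed.

Definition lo (c : nat) : R := pp c + j%:R * (1 - pp c) / c%:R.
Definition hi (c : nat) : R := pp c + j.+1%:R * (1 - pp c) / c%:R.

Lemma pp_lt1 {c} : (0 < c)%N -> pp c < 1.
Proof. by move=> c0; apply: le_lt_trans (pp_le_pp1 c0) pp1_lt1. Qed.

Lemma lo_ge {c} : (0 < c)%N -> pp c <= lo c.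
Proof.
move=> c0; rewrite /lo lerDl; apply: divr_ge0; last by rewrite ler0n.
by apply: mulr_ge0; rewrite ?ler0n // subr_ge0 ltW // pp_lt1.
Qed.

Lemma hi_lo c : hi c - lo c = (1 - pp c) / c%:R.
Proof. rewrite /hi /lo; ring. Qed.


Lemma q_gt0 {c} : (0 < c)%N -> 0 < 1 - pp c.
Proof. by move=> c0; rewrite subr_gt0 pp_lt1. Qed.

Lemma hi_le1 c : (j < c)%N -> hi c <= 1.
Proof.
move=> jc; have c0 : (0 < c)%N by apply: leq_ltn_trans jc.
have cpos : 0 < (c%:R : R) by rewrite ltr0n.
have h : j.+1%:R * (1 - pp c) / c%:R <= 1 - pp c.
  by rewrite ler_pdivrMr // [_ * c%:R]mulrC ler_pM2r ?q_gt0 // ler_nat.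
by rewrite /hi -lerBrDl.
Qed.

Lemma lo_lt_hi c : (0 < c)%N -> lo c < hi c.
Proof.
move=> c0; rewrite -subr_gt0 hi_lo; apply: divr_gt0; first exact: q_gt0.
by rewrite ltr0n.
Qed.

Lemma dec_hit c u : (j < c)%N -> lo c <= u < hi c -> pw_decision epsz c u = Some j.
Proof.
move=> jc /andP[h1 h2]; have c0 : (0 < c)%N by apply: leq_ltn_trans jc.
have cpos : 0 < (c%:R : R) by rewrite ltr0n.
have qpos := q_gt0 c0.
rewrite /pw_decision -/(pp c).
have -> : (u < pp c) = false by apply/negbTE; rewrite -leNgt (le_trans (lo_ge c0)).
congr Some; apply: truncn_def.
have qn : 1 - pp c != 0 by rewrite lt0r_neq0.
have cn : c%:R != 0 :> R by rewrite lt0r_neq0.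
have Hx : c%:R * (u - pp c) / (1 - pp c) * (1 - pp c) = c%:R * (u - pp c) by rewrite divfK.
have Hlo : j%:R * (1 - pp c) = (lo c - pp c) * c%:R by rewrite /lo [pp c + _]addrC addrK divfK.
have Hhi : j.+1%:R * (1 - pp c) = (hi c - pp c) * c%:R by rewrite /hi [pp c + _]addrC addrK divfK.
rewrite -(ler_pM2r qpos) -(ltr_pM2r qpos) Hx Hlo Hhi.
apply/andP; split; nra.
Qed.

Lemma gap c M : (0 < c)%N -> (c <= M)%N -> (1 - pp 1) / M%:R <= (1 - pp c) / c%:R.
Proof.
move=> c0 cM; have cpos : 0 < (c%:R : R) by rewrite ltr0n.
have Mpos : 0 < (M%:R : R) by rewrite ltr0n (leq_trans c0).
apply: ler_pM; rewrite ?subr_ge0 ?invr_ge0 ?ler0n //.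
- exact: ltW pp1_lt1.
- by rewrite lerB // pp_le_pp1.
- by rewrite lef_pV2 ?posrE // ler_nat.
Qed.

End Reals.
Arguments pp {R}.
Arguments pp_gt0 {R}.
Arguments pp_le_pp1 {R epsz} heps {c}.
Arguments pp1_lt1 {R epsz}.
Arguments pp_lt1 {R epsz} heps {c}.
Arguments lo_ge {R epsz} heps j {c}.
Arguments hi_lo {R}.
Arguments q_gt0 {R epsz} heps {c}.
Arguments hi_le1 {R epsz}.
Arguments lo_lt_hi {R epsz}.
Arguments dec_hit {R epsz}.
Arguments gap {R epsz}.
Arguments lo {R}.
Arguments hi {R}.
Section Prod.
Context (R : realType).

Lemma harmonic_unbounded (K : R) : exists n, K < series harmonic n.
Proof.
apply/not_existsP => /= hK.
have hle : forall n, series (@harmonic R) n <= K by move=> n; rewrite leNgt; apply/negP/hK.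
apply: (@dvg_harmonic R); apply: nondecreasing_is_cvgn.
  move=> n m nm; rewrite /series /= (big_cat_nat (leq0n n) nm) /= lerDl.
  by apply: sumr_ge0 => k _; apply: ltW; apply: harmonic_gt0.
by exists K => _ [n _ <-]; apply: hle.
Qed.

Context (del : R) (del0 : 0 < del) (del1 : del <= 1).

Definition pi (n M : nat) : R := \prod_(k < n) (1 - del / (M + k)%:R).

Lemma fac_ge0 M k : (0 < M)%N -> 0 <= 1 - del / (M + k)%:R.
Proof.
move=> M0; rewrite subr_ge0 ler_pdivrMr ?ltr0n ?addn_gt0 ?M0 // mul1r.
by apply: le_trans del1 _; rewrite ler1n addn_gt0 M0.
Qed.

Lemma pi_ge0 n M : (0 < M)%N -> 0 <= pi n M.
Proof. by move=> M0; apply: prodr_ge0 => k _; apply: fac_ge0. Qed.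

Lemma pi_rec n M : pi n.+1 M = (1 - del / M%:R) * pi n M.+1.
Proof.
rewrite /pi big_ord_recl /= addn0; congr (_ * _); apply: eq_bigr => k _.
by rewrite /bump /= add1n addSnnS.
Qed.

Lemma pi_small M e : (0 < M)%N -> 0 < e -> exists n, pi n M < e.
Proof.
move=> M0 e0.
pose T n := \sum_(k < n) del / (M + k)%:R.
have key : forall n, pi n M * (1 + T n) <= 1.
  elim=> [|n IH]; first by rewrite /pi /T !big_ord0 mul1r addr0.
  rewrite /pi /T !big_ord_recr /= -/(pi n M) -/(T n).
  set x := del / (M + n)%:R.
  have x0 : 0 <= x by rewrite divr_ge0 ?ler0n // ltW.
  have T0 : 0 <= T n by apply: sumr_ge0 => k _; rewrite divr_ge0 ?ler0n // ltW.
  have p0 := pi_ge0 n M M0.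
  have h1 : pi n M * (1 - x) * (1 + (T n + x)) = pi n M * (1 + T n) - pi n M * (x * T n + x * x) by ring.
  have h2 : 0 <= pi n M * (x * T n + x * x) by apply: mulr_ge0 => //; apply: addr_ge0; apply: mulr_ge0.
  rewrite h1; lra.
have Mpos : 0 < (M%:R : R) by rewrite ltr0n.
have [n hn] := harmonic_unbounded (M%:R / (del * e)).
exists n.
have hT : del / M%:R * series harmonic n <= T n.
  rewrite /series /= big_mkord /T mulr_sumr; apply: ler_sum => k _.
  rewrite /harmonic /= -mulrA ler_pM2l // -invfM.
  rewrite lef_pV2 ?posrE ?mulr_gt0 ?ltr0n ?addn_gt0 ?M0 // -natrM ler_nat.
  by rewrite mulnS; nia.
have pos : 0 < e * (del / M%:R) by rewrite mulr_gt0 ?divr_gt0.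
have h3 : 1 < e * (del / M%:R) * series harmonic n.
  rewrite -(ltr_pM2l pos) in hn.
  suff E : e * (del / M%:R) * (M%:R / (del * e)) = 1 by rewrite E in hn.
  by field; rewrite ?lt0r_neq0 ?ltr0n.
have h4 : e * (del / M%:R) * series harmonic n <= e * T n.
  by rewrite -mulrA ler_pM2l.
have := key n; have := pi_ge0 n M M0; nra.
Qed.

End Prod.
Arguments pi {R}.
Arguments pi_rec {R}.
Arguments pi_ge0 {R del}.
Arguments pi_small {R del}.
Arguments fac_ge0 {R del}.

Section Main.
Context (d : measure_display) (T : measurableType d) (R : realType)
    (P : probability T R) (epsz : R) (U : nat -> T -> R).
Hypothesis heps : epsz < 0.
Hypothesis hind : mutually_independent P U.
Hypothesis hunif : forall m, uniform01 P (U m).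
Variable j : nat.

Definition Nset (c : nat) : set R := [set` `]-oo, pp epsz c[ ].
Definition Iset (c : nat) : set R := [set` `[lo epsz j c, hi epsz j c[ ].
Definition Oset (c : nat) : set R := [set` `[pp epsz c, +oo[ ] `\` Iset c.

Arguments Nset : simpl never.
Arguments Oset : simpl never.
Arguments Iset : simpl never.

Fixpoint nohit (n M c : nat) : set T :=
  if n is n'.+1 then
    (U M @^-1` Nset c `&` nohit n' M.+1 c.+1) `|`
    (U M @^-1` Oset c `&` nohit n' M.+1 c)
  else setT.

Lemma measU m B : measurable B -> measurable (U m @^-1` B).
Proof. by move=> mB; rewrite -[_ @^-1` _]setTI; apply: (hunif m).1. Qed.

Lemma mNset c : measurable (Nset c). Proof. exact: measurable_itv. Qed.
Lemma mIset c : measurable (Iset c). Proof. exact: measurable_itv. Qed.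
Lemma mOset c : measurable (Oset c).
Proof. by apply: measurableD; apply: measurable_itv. Qed.

Lemma nohit_meas n M c : measurable (nohit n M c).
Proof.
elim: n M c => [|n IH] M c /=; first exact: measurableT.
apply: measurableU; apply: measurableI => //; apply: measU;
  [exact: mNset | exact: mOset].
Qed.

Definition rect (M : nat) (B : nat -> set R) : set T :=
  \bigcap_(i in [set i | (i < M)%N]) (U i @^-1` B i).

Lemma rect_meas M B : (forall i, measurable (B i)) -> measurable (rect M B).
Proof. by move=> mB; apply: bigcap_measurableType => k _; apply: measU. Qed.

Lemma rect_prob M B : (forall i, measurable (B i)) ->
  P (rect M B) = (\prod_(i <- iota 0 M) P (U i @^-1` B i))%E.
Proof.
move=> mB; rewrite -hind; [|exact: iota_uniq|by move=> i _; apply: mB].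
congr (P _); rewrite /rect; congr (\bigcap_(i in _) _); apply/seteqP; split => i /=;
  by rewrite mem_iota add0n.
Qed.

Definition updB (M : nat) (B : nat -> set R) (B' : set R) :=
  fun i => if i == M then B' else B i.

Lemma rect_step M B B' : rect M B `&` U M @^-1` B' = rect M.+1 (updB M B B').
Proof.
apply/seteqP; split => w /=.
  move=> [hr hB] i /= iM; rewrite /updB; case: eqP => [->//|/eqP ne].
  by apply: hr => /=; rewrite ltn_neqAle ne -ltnS.
move=> h; split.
  move=> i /= iM; have := h i (ltnW iM); rewrite /updB.
  by rewrite (ltn_eqF iM).
by have := h M (ltnSn M); rewrite /updB eqxx.
Qed.

Lemma P_step M B B' : (forall i, measurable (B i)) -> measurable B' ->
  P (rect M B `&` U M @^-1` B') = (P (rect M B) * P (U M @^-1` B'))%E.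
Proof.
move=> mB mB'; have mU : forall i, measurable (updB M B B' i).
  by move=> i; rewrite /updB; case: eqP.
rewrite rect_step !rect_prob // -addn1 iotaD big_cat /= big_seq1 add0n.
congr (_ * _)%E; last by rewrite /updB eqxx.
rewrite big_seq_cond [in RHS]big_seq_cond; apply: eq_bigr => i.
by rewrite mem_iota add0n andbT /updB => /ltn_eqF ->.
Qed.


Lemma PI c M : (j < c)%N ->
  P (U M @^-1` Iset c) = (hi epsz j c - lo epsz j c)%:E.
Proof.
move=> jc; have c0 : (0 < c)%N by apply: leq_ltn_trans jc.
rewrite (hunif M).2; last exact: mIset.
rewrite setIidl; last first.
  move=> u; rewrite /Iset /mkset !in_itv /= => /andP[h1 h2]; apply/andP; split.
    exact: le_trans (ltW (pp_gt0 epsz c)) (le_trans (lo_ge heps j c0) h1).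
  exact: le_trans (ltW h2) (hi_le1 heps _ _ jc).
by rewrite /Iset lebesgue_measure_itv /= lte_fin lo_lt_hi // EFinB.
Qed.

Lemma NO c M : (j < c)%N ->
  (P (U M @^-1` Nset c) + P (U M @^-1` Oset c))%E =
  (1 - (hi epsz j c - lo epsz j c))%:E.
Proof.
move=> jc; have c0 : (0 < c)%N by apply: leq_ltn_trans jc.
rewrite -measureU; [|apply: measU; exact: mNset|apply: measU; exact: mOset|].
  rewrite -preimage_setU.
  have -> : Nset c `|` Oset c = ~` Iset c.
    apply/seteqP; split => u /=; rewrite /Nset /Oset /Iset /= !in_itv /= ?andbT.
      case=> [hu|[_ hI]]; last exact: hI; move=> /andP[h1 _].
      by move: (lt_le_trans hu (le_trans (lo_ge heps j c0) h1)); rewrite ltxx.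
    move=> hI; have [hu|hu] := ltP u (pp epsz c); [by left|by right].
  rewrite -preimage_setC; apply: eq_trans; first (apply: probability_setC; apply: measU; exact: mIset).
  by rewrite PI // EFinB.
apply/seteqP; split => // u /=; rewrite /Nset /Oset /= !in_itv /= ?andbT.
by move=> [hu [hu' _]]; move: (lt_le_trans hu hu'); rewrite ltxx.
Qed.


Definition del : R := 1 - pp epsz 1.
Lemma del0 : 0 < del. Proof. by rewrite /del subr_gt0 pp1_lt1. Qed.
Lemma del1 : del <= 1. Proof. by rewrite /del lerBlDr lerDl ltW // pp_gt0. Qed.

Lemma bound n : forall M c B, (j < c)%N -> (c <= M)%N ->
  (forall i, measurable (B i)) ->
  (P (rect M B `&` nohit n M c) <= P (rect M B) * (pi del n M)%:E)%E.
Proof.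
elim: n => [|n IH] M c B jc cM mB.
  by rewrite /= setIT /pi big_ord0 mule1.
have c0 : (0 < c)%N by apply: leq_ltn_trans jc.
have M0 : (0 < M)%N by apply: leq_trans cM.
have E : rect M B `&` nohit n.+1 M c =
  (rect M.+1 (updB M B (Nset c)) `&` nohit n M.+1 c.+1) `|`
  (rect M.+1 (updB M B (Oset c)) `&` nohit n M.+1 c).
  by rewrite -!rect_step [nohit _ _ _]/= setIUr !setIA.
rewrite E.
have mU : forall B', measurable B' -> forall i, measurable (updB M B B' i).
  by move=> B' mB' i; rewrite /updB; case: eqP.
rewrite measureU; first last.
- apply/seteqP; split => // w /= [[r1 _] [r2 _]].
  have hN := r1 M (ltnSn M); have hO := r2 M (ltnSn M).
  move: hN hO; rewrite /updB eqxx /Nset /Oset /mkset /= !in_itv /= ?andbT => hu [hu' _].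
  by move: (lt_le_trans hu hu'); rewrite ltxx.
- by apply: measurableI; [apply: rect_meas; apply: mU; exact: mOset|exact: nohit_meas].
- by apply: measurableI; [apply: rect_meas; apply: mU; exact: mNset|exact: nohit_meas].
apply: le_trans.
  apply: leeD; [apply: IH => //; [exact: ltnW|exact: mU (mNset c)]
               |apply: IH => //; [exact: ltnW|exact: mU (mOset c)]].
rewrite -!rect_step !P_step //; [|exact: mOset|exact: mNset].
rewrite -ge0_muleDl ?mule_ge0 ?measure_ge0 //.
rewrite -ge0_muleDr ?measure_ge0 // NO // -muleA -EFinM.
apply: lee_wpmul2l; first exact: measure_ge0.
rewrite lee_fin pi_rec; apply: ler_wpM2r; first exact: pi_ge0 del1 _ _ (ltn_trans M0 (ltnSn M)).
rewrite hi_lo lerB //; exact: gap heps c M c0 cM.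
Qed.


Lemma nch_le w m : (nchildren epsz U w m <= m)%N.
Proof.
elim: m => //= m IH; case: pw_decision => [_|]; first exact: leqW.
by [].
Qed.

Lemma nch_mono w m m' : (m <= m')%N ->
  (nchildren epsz U w m <= nchildren epsz U w m')%N.
Proof.
move=> /subnK <-; elim: (m' - m)%N => //= k IH.
case: pw_decision => [_|] //; exact: leqW.
Qed.

Lemma nohit_sub n : forall M w,
  (forall k, (M <= k)%N -> decision epsz U w k <> Some j) ->
  (j < nchildren epsz U w M)%N ->
  nohit n M (nchildren epsz U w M) w.
Proof.
elim: n => [//|n IH] M w hk jc /=.
have hM := hk M (leqnn M); rewrite /decision in hM.
have hk' : forall k, (M.+1 <= k)%N -> decision epsz U w k <> Some j.
  by move=> k Mk; apply: hk; apply: ltnW.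
set c := nchildren epsz U w M in jc hM *.
have c0 : (0 < c)%N by apply: leq_ltn_trans jc.
have [hu|hu] := ltP (U M w) (pp epsz c).
  left; split.
    by rewrite /Nset /mkset in_itv /=.
  have -> : c.+1 = nchildren epsz U w M.+1.
    by rewrite /= -/c /pw_decision -/(pp epsz c) hu.
  apply: IH => //=; rewrite -/c /pw_decision -/(pp epsz c) hu; exact: ltnW.
right; split.
  rewrite /Oset /Iset /mkset /=; split; first by rewrite in_itv /= hu.
  move=> hI; apply: hM; apply: dec_hit => //; by rewrite in_itv /= in hI.
have e : nchildren epsz U w M.+1 = c.
  by rewrite /= -/c /pw_decision -/(pp epsz c) ltNge hu.
rewrite -{1}e; apply: IH => //; by rewrite e.
Qed.


Definition Y (N c : nat) : set T := \bigcap_n nohit n N c.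

Lemma Y_meas N c : measurable (Y N c).
Proof. by apply: bigcapT_measurable => n; apply: nohit_meas. Qed.

Lemma Y_null N c : (j < c)%N -> (c <= N)%N -> P (Y N c) = 0%E.
Proof.
move=> jc cN; have c0 : (0 < c)%N by apply: leq_ltn_trans jc.
have N0 := leq_trans c0 cN.
have hb : forall n, (P (Y N c) <= (pi del n N)%:E)%E.
  move=> n.
  have hr : rect N (fun=> setT) = setT.
    by apply/seteqP; split => // w _ i _.
  have h1 := bound n N c (fun=> setT) jc cN (fun=> measurableT).
  rewrite hr setTI probability_setT mul1e in h1.
  apply: le_trans h1.
  apply: le_measure; rewrite ?inE; [exact: Y_meas|exact: nohit_meas|].
  by move=> w hw; apply: hw.
apply/eqP; rewrite eq_le measure_ge0 andbT.
apply/lee_addgt0Pr => e e0; rewrite add0e.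
have [n hn] := pi_small del0 del1 N e N0 e0.
by apply: le_trans (hb n) _; rewrite lee_fin ltW.
Qed.


Lemma main_sec : {ae P, forall w, (exists m, (j < nchildren epsz U w m)%N) ->
                     child_visited_io epsz U w j}.
Proof.
pose Z := \bigcup_N \bigcup_c (if (j < c)%N && (c <= N)%N then Y N c else set0).
have hZ : P.-negligible Z.
  apply: negligible_bigcup => N; apply: negligible_bigcup => c.
  case: ifP => [/andP[jc cN]|_]; last exact: negligible_set0.
  by exists (Y N c); split => //; [exact: Y_meas|exact: Y_null].
apply: (negligibleS _ hZ) => w /= hQ; apply: contrapT => hnZ; apply: hQ.
move=> [m0 jm0] N; apply: contrapT => hno.
apply: hnZ; set N' := maxn N m0.
have cge : (j < nchildren epsz U w N')%N.
  exact: leq_trans jm0 (nch_mono w m0 N' (leq_maxr N m0)).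
exists N' => //; exists (nchildren epsz U w N') => //.
rewrite cge nch_le /=.
move=> n _; apply: nohit_sub => // k hk hd; apply: hno.
by exists k => //; apply: leq_trans hk; exact: leq_maxl.
Qed.

End Main.

Theorem lemma2 (d : measure_display) (T : measurableType d) (R : realType)
    (P : probability T R) (epsz : R) (U : nat -> T -> R) :
  epsz < 0 ->
  mutually_independent P U ->
  (forall m, uniform01 P (U m)) ->
  forall j : nat,
    {ae P, forall w, (exists m, (j < nchildren epsz U w m)%N) ->
                     child_visited_io epsz U w j}.
Proof.
move=> heps hind hunif j.
exact: main_sec.
Qed.
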